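(* Let $Q$ be a quasi-array of size $m$, let $\sigma$ be a composition of $m$, let $k\in\{1,\dots,m\}$, and let $T=\pi_\sigma(Q)$. Suppose the $k$-th diagonal of $Q$ meets $T$ in a cell containing the entry $\ell$. Then: (1) $C_k$ is defined on $Q$ if and only if $e_{\ell-1}$ is defined on $T$ and changes the symbol $\ell$ lying in the cell of $T$ on the $k$-th diagonal; in this case $e_{\ell-1}(T)=\pi_\sigma(C_k(Q))$. (2) $D_k$ is defined on $Q$ if and only if $f_{\ell}$ is defined on $T$ and changes the symbol $\ell$ lying in the cell of $T$ on the $k$-th diagonal; in this case $f_{\ell}(T)=\pi_\sigma(D_k(Q))$.
   Context: Entries are positive integers; rows are indexed top to bottom, columns left to right. A quasi-array of size $m$ is an array $Q$ with cells $(i,j)$, $1\le i\le m$, $1\le j\le m-i+1$, each containing a positive integer $Q_{(i,j)}$, such that $Q_{(1,j)}\le Q_{(1,j+1)}$ and $Q_{(i,j)}=Q_{(1,i+j-1)}+i-1$ for all cells. The $k$-th diagonal is the set of cells $(i,j)$ with $i+j-1=k$. Operators: $D_m$ is always defined on $Q$ of size $m$ and adds $1$ to every entry of the $m$-th diagonal; for $1\le k\le m-1$, $D_k$ is defined iff $Q_{(1,k)}<Q_{(1,k+1)}$, and then adds $1$ to all entries of the $k$-th diagonal; for $2\le k\le m$, $C_k$ is defined iff $Q_{(1,k)}>Q_{(1,k-1)}$, and then subtracts $1$ from all entries of the $k$-th diagonal; $C_1$ is defined iff $Q_{(1,1)}>1$, and then subtracts $1$ from $Q_{(1,1)}$. A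 quasi-ribbon diagram of shape $\sigma=(\sigma_1,\dots,\sigma_r)$ (a composition) has $\sigma_i$ cells in row $i$, with the leftmost cell of row $i+1$ directly below the rightmost cell of row $i$. A quasi-ribbon tableau is a filling of such a diagram with positive integers, weakly increasing along rows and strictly increasing down columns. For $\sigma$ a composition of $m$, $\pi_\sigma(Q)$ is the quasi-ribbon tableau obtained by taking the cells of $Q$ forming a quasi-ribbon diagram of shape $\sigma$ whose first cell is $(1,1)$ (so its cells lie one on each of the diagonals $1,\dots,m$), with the entries of $Q$. The column reading of a quasi-ribbon tableau is the word obtained by reading columns left to right, each column bottom to top; operators on tableaux act via their column readings, each letter of the word corresponding to a cell. Quasi-Kashiwara operators on a word $u$ over the positive integers, for $i\ge1$: if $u$ contains a (not necessarily consecutive) subsequence $(i+1)\,i$, both $e_i(u)$ and $f_i(u)$ are undefined; otherwise $e_i(u)$ is obtained by replacing the leftmost $i+1$ by $i$ (undefined if $u$ has no $i+1$), and $f_i(u)$ is obtained by replacing the rightmost $i$ by $i+1$ (undefined if $u$ has no $i$). $e_0$ is undefined. *)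

(* Defs.v *)
From mathcomp Require Import all_boot.
Set Implicit Arguments. Unset Strict Implicit. Unset Printing Implicit Defensive.

(* Arrays are functions (row index i, column index j) -> entry, 1-based;
   only the cells (i,j), 1 <= i <= m, 1 <= j <= m-i+1 matter. *)

Definition is_quasi_array (m : nat) (Q : nat -> nat -> nat) : Prop :=
  (forall i j, 1 <= i -> 1 <= j -> i + j <= m.+1 ->
      0 < Q i j /\ Q i j = Q 1 (i + j - 1) + (i - 1))
  /\ (forall j, 1 <= j -> j < m -> Q 1 j <= Q 1 j.+1).

Definition on_diag (k i j : nat) : bool := i + j == k.+1.

Definition D_op (k : nat) (Q : nat -> nat -> nat) : nat -> nat -> nat :=
  fun i j => if on_diag k i j then Q i j + 1 else Q i j.
Definition C_op (k : nat) (Q : nat -> nat -> nat) : nat -> nat -> nat :=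
  fun i j => if on_diag k i j then Q i j - 1 else Q i j.

Definition D_defined (m k : nat) (Q : nat -> nat -> nat) : Prop :=
  if k == m then True else Q 1 k < Q 1 k.+1.
Definition C_defined (k : nat) (Q : nat -> nat -> nat) : Prop :=
  if k == 1 then 1 < Q 1 1 else Q 1 k.-1 < Q 1 k.

Definition is_composition (m : nat) (sigma : seq nat) : bool :=
  all (fun s => 0 < s) sigma && (sumn sigma == m).

(* Cells of the quasi-ribbon diagram of shape sigma whose first cell is (r,c),
   listed row by row (left to right); the first cell of row i+1 is directly
   below the last cell of row i. *)
Fixpoint ribbon_cells_from (r c : nat) (sigma : seq nat) : seq (nat * nat) :=
  match sigma with
  | [::] => [::]
  | s :: sigma' =>
      [seq (r, c + t) | t <- iota 0 s] ++ ribbon_cells_from r.+1 (c + s - 1) sigma'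
  end.
Definition ribbon_cells (sigma : seq nat) := ribbon_cells_from 1 1 sigma.

(* Column reading order of the cells: columns left to right, each column
   bottom to top. *)
Definition col_reading_cells (sigma : seq nat) : seq (nat * nat) :=
  flatten [seq [seq x <- rev (ribbon_cells sigma) | x.2 == col]
          | col <- iota 1 (sumn sigma)].

Record qr_tableau := QRTableau { qr_shape : seq nat; qr_fill : nat * nat -> nat }.

Definition is_qr_tableau (T : qr_tableau) : Prop :=
  let cs := ribbon_cells (qr_shape T) in
  (forall x, x \in cs -> 0 < qr_fill T x) /\
  (forall x, x \in cs -> (x.1, x.2.+1) \in cs -> qr_fill T x <= qr_fill T (x.1, x.2.+1)) /\
  (forall x, x \in cs -> (x.1.+1, x.2) \in cs -> qr_fill T x < qr_fill T (x.1.+1, x.2)).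

Definition col_reading (T : qr_tableau) : seq nat :=
  [seq qr_fill T x | x <- col_reading_cells (qr_shape T)].

(* pi_sigma(Q): the cells of Q forming the quasi-ribbon diagram of shape sigma
   with first cell (1,1), with the entries of Q. *)
Definition pi_sigma (sigma : seq nat) (Q : nat -> nat -> nat) : qr_tableau :=
  QRTableau sigma (fun x => Q x.1 x.2).

Definition qk_blocked (i : nat) (u : seq nat) : bool := subseq [:: i.+1; i] u.

(* position (0-based) of the leftmost i+1, resp. the rightmost i *)
Definition e_pos (i : nat) (u : seq nat) : nat := index i.+1 u.
Definition f_pos (i : nat) (u : seq nat) : nat := (size u).-1 - index i (rev u).

Definition e_op (i : nat) (u : seq nat) : option (seq nat) :=
  if (i == 0) || qk_blocked i u || (i.+1 \notin u) then None
  else Some (set_nth 0 u (e_pos i u) i).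

Definition f_op (i : nat) (u : seq nat) : option (seq nat) :=
  if (i == 0) || qk_blocked i u || (i \notin u) then None
  else Some (set_nth 0 u (f_pos i u) i.+1).

Definition is_some {A} (o : option A) : bool := if o is Some _ then true else false.

(* Main.v *)
Require Import Defs.
From mathcomp Require Import all_boot zify.

Lemma ribbon_nth sigma : forall r c, all (fun s => 0 < s) sigma ->
  size (ribbon_cells_from r c sigma) = sumn sigma /\
  forall t, t < sumn sigma ->
    let x := nth (0,0) (ribbon_cells_from r c sigma) t in
    [/\ x.1 + x.2 = r + c + t, r <= x.1, c <= x.2 &
       t.+1 < sumn sigma -> nth (0,0) (ribbon_cells_from r c sigma) t.+1 = (x.1, x.2.+1)
                         \/ nth (0,0) (ribbon_cells_from r c sigma) t.+1 = (x.1.+1, x.2)].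
Proof.
elim: sigma => [|s sigma IH] r c /=; first by split => // t.
case/andP => s0 Hall.
have [IHs IHn] := IH r.+1 (c + s - 1) Hall.
have Hf : forall t, t < s -> nth (0,0) ([seq (r, c + t0) | t0 <- iota 0 s] ++ ribbon_cells_from r.+1 (c + s - 1) sigma) t = (r, c + t).
  move=> t Ht; rewrite nth_cat size_map size_iota Ht (nth_map 0) ?size_iota // nth_iota //.
have Hs : forall t, s <= t -> nth (0,0) ([seq (r, c + t0) | t0 <- iota 0 s] ++ ribbon_cells_from r.+1 (c + s - 1) sigma) t = nth (0,0) (ribbon_cells_from r.+1 (c + s - 1) sigma) (t - s).
  move=> t Ht; rewrite nth_cat size_map size_iota ltnNge Ht //.
split; first by rewrite size_cat size_map size_iota IHs.
move=> t Ht.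
case: (ltnP t s) => Hts.
  rewrite Hf //=; split => //; try lia.
  move=> Ht1; case: (ltnP t.+1 s) => Ht1s.
    by left; rewrite Hf // addnS.
  right; rewrite Hs // (_ : t.+1 - s = 0) ; last lia.
  have Hp : 0 < sumn sigma by lia.
  have [E1 E2 E3 _] := IHn 0 Hp.
  move: E1 E2 E3; case: (nth _ _ 0) => a b /= E1 E2 E3.
  have -> : a = r.+1 by lia.
  have -> : b = c + s - 1 by lia.
  congr pair; lia.
rewrite Hs //.
have Hp : t - s < sumn sigma by lia.
have [E1 E2 E3 E4] := IHn _ Hp.
split; try lia.
move=> Ht1; rewrite Hs; last lia.
rewrite (_ : t.+1 - s = (t - s).+1); last lia.
apply: E4; lia.
Qed.

Definition rL (x y : nat * nat) := (x.2 < y.2) || ((x.2 == y.2) && (x.1 < y.1)).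
Definition ltR (x y : nat * nat) := (x.2 < y.2) || ((x.2 == y.2) && (y.1 < x.1)).

Lemma rL_trans : transitive rL.
Proof. move=> y x z; rewrite /rL; case: x y z => a b [c d] [e f] /=; lia. Qed.
Lemma ltR_trans : transitive ltR.
Proof. move=> y x z; rewrite /ltR; case: x y z => a b [c d] [e f] /=; lia. Qed.
Lemma ltR_irr : irreflexive ltR.
Proof. move=> [a b]; rewrite /ltR /=; lia. Qed.

Lemma flat_pairwise (L : seq (nat * nat)) n : forall a,
  sorted rL L ->
  pairwise ltR (flatten [seq [seq x <- rev L | x.2 == col] | col <- iota a n]).
Proof.
elim: n => [|n IH] a HL //=.
rewrite pairwise_cat IH // andbT; apply/andP; split.
  apply/allrelP => x y; rewrite mem_filter => /andP [/eqP Hx _] /flatten_mapP [c].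
  rewrite mem_iota mem_filter => Hc /andP [/eqP Hy _].
  rewrite /ltR; lia.
have Ht : transitive (fun x y => rL y x) by move=> y x z H1 H2; exact: rL_trans H2 H1.
have : sorted (fun x y => rL y x) (rev L) by rewrite rev_sorted.
move/(sorted_filter Ht (fun x => x.2 == a)).
rewrite sorted_pairwise //.
apply: (sub_in_pairwise (P := fun x : nat * nat => x.2 == a)).
  move=> x y /eqP Hx /eqP Hy; rewrite /rL /ltR; lia.
by apply/allP => x; rewrite mem_filter => /andP [].
Qed.

Lemma flat_mem (L : seq (nat * nat)) n a y :
  (y \in flatten [seq [seq x <- rev L | x.2 == col] | col <- iota a n]) =
  (y \in L) && (a <= y.2 < a + n).
Proof.
apply/flatten_mapP/idP.
  by case=> c; rewrite mem_iota mem_filter mem_rev => Hc /andP [/eqP -> ->].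
case/andP => Hy Hb; exists y.2; first by rewrite mem_iota.
by rewrite mem_filter mem_rev eqxx.
Qed.

Lemma index_posP (s : seq nat) l p : p < size s -> nth 0 s p = l ->
  (index l s = p <-> forall i, i < p -> nth 0 s i != l).
Proof.
move=> Hp Hl; split.
  move=> <- i Hi; have := before_find 0 Hi; by rewrite /= => ->.
move=> H; case: (ltngtP (index l s) p) => // Hc.
  have Hin : l \in s by rewrite -index_mem (ltn_trans Hc Hp).
  by move: (H _ Hc); rewrite nth_index // eqxx.
by have := before_find 0 Hc; rewrite /= Hl eqxx.
Qed.

Lemma rindex_posP (s : seq nat) l p : p < size s -> nth 0 s p = l ->
  ((size s).-1 - index l (rev s) = p <-> forall i, p < i < size s -> nth 0 s i != l).
Proof.
move=> Hp Hl.
have Hp' : (size s).-1 - p < size (rev s) by rewrite size_rev; lia.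
have Hl' : nth 0 (rev s) ((size s).-1 - p) = l.
  rewrite nth_rev; last by rewrite size_rev in Hp'.
  rewrite -Hl; congr nth; lia.
have Hle : index l (rev s) <= (size s).-1 - p.
  by rewrite leqNgt; apply/negP => /(before_find 0) /=; rewrite Hl' eqxx.
have HH := @index_posP _ _ _ Hp' Hl'.
split.
  move=> E i Hi; have := (proj1 HH).
  have -> : index l (rev s) = (size s).-1 - p by lia.
  move/(_ erefl ((size s).-1 - i)); rewrite nth_rev; last lia.
  have -> : size s - ((size s).-1 - i).+1 = i by lia.
  apply; lia.
move=> H.
have : index l (rev s) = (size s).-1 - p.
  apply/HH => i Hi; rewrite nth_rev; last lia.
  apply: H; lia.
lia.
Qed.

Lemma subseq2P (s : seq nat) a b :
  reflect (exists i j, [/\ i < j, j < size s, nth 0 s i = a & nth 0 s j = b])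
          (subseq [:: a; b] s).
Proof.
elim: s => [|x s IH] /=.
  by apply: ReflectF => -[i [j [_ ]]].
case: eqP => [<-|Hxa].
  rewrite sub1seq; apply: (iffP idP).
    move=> Hb; exists 0, (index b s).+1; split => //=.
      by rewrite ltnS index_mem.
    by rewrite nth_index.
  case=> [i [j [Hij Hj _ Hb]]]; case: j Hij Hj Hb => // j _ /= Hj <-.
  exact: mem_nth.
apply: (iffP IH).
  by case=> [i [j [H1 H2 H3 H4]]]; exists i.+1, j.+1.
case=> [[|i] [[|j] [H1 H2 H3 H4]]] //=.
  by move: H3 => /= H3; case: Hxa.
by exists i, j.
Qed.

Lemma set_nth_map (R : seq (nat * nat)) (f : nat * nat -> nat) c v :
  uniq R -> c \in R ->
  set_nth 0 (map f R) (index c R) v = map (fun y => if y == c then v else f y) R.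
Proof.
elim: R => [|x R IH] //= /andP [HxR Hu].
case: (eqVneq x c) => [E|Hxc] /=.
  subst x; move=> _; congr cons; apply/eq_in_map => y Hy.
  by case: eqP => // E; move: HxR; rewrite -E Hy.
rewrite inE eq_sym (negbTE Hxc) /= => Hc; rewrite IH //.
Qed.

Lemma mono_from_step (m : nat) (rw cl : nat -> nat) :
  (forall u, u.+1 < m -> (rw u.+1 = rw u /\ cl u.+1 = cl u + 1) \/ (rw u.+1 = rw u + 1 /\ cl u.+1 = cl u)) ->
  forall u u', u <= u' -> u' < m -> rw u <= rw u' /\ cl u <= cl u'.
Proof.
move=> Hs u u' Hle; rewrite -(subnK Hle); elim: (u' - u) => [|n IH] /= Hn; first by [].
have [H1 H2] := IH (ltnW Hn).
have := Hs (n + u); rewrite addSn => /(_ Hn); lia.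
Qed.

Section Core.
Variables (m t : nat) (rw cl a : nat -> nat) (ord : nat -> nat -> Prop).
Hypothesis Hsum : forall u, u < m -> rw u + cl u = u + 2.
Hypothesis Hr1 : forall u, u < m -> 1 <= rw u.
Hypothesis Hc1 : forall u, u < m -> 1 <= cl u.
Hypothesis Hstep : forall u, u.+1 < m -> (rw u.+1 = rw u /\ cl u.+1 = cl u + 1) \/ (rw u.+1 = rw u + 1 /\ cl u.+1 = cl u).
Hypothesis Ha : forall d d', 1 <= d -> d <= d' -> d' <= m -> a d <= a d'.
Hypothesis Hapos : forall u, u < m -> 0 < a u.+1 + (rw u - 1).
Hypothesis Hord : forall u u', u < m -> u' < m -> (ord u u' <-> cl u < cl u' \/ (cl u = cl u' /\ u' < u)).
Hypothesis Ht : t < m.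

Let v u := a u.+1 + (rw u - 1).

Lemma vmono u u' : u <= u' -> u' < m -> v u <= v u'.
Proof.
move=> H1 H2; have [R1 _] := @mono_from_step _ _ _ Hstep _ _ H1 H2.
have := Ha u.+1 u'.+1 erefl H1 H2; rewrite /v; lia.
Qed.

Lemma vstrict u u' : u <= u' -> u' < m -> rw u < rw u' -> v u < v u'.
Proof.
move=> H1 H2 H3; have := Hr1 _ (leq_ltn_trans H1 H2); have := Ha u.+1 u'.+1 erefl H1 H2; rewrite /v; lia.
Qed.

Lemma ord_lt u u' : u < m -> u' < m -> ord u u' -> (u < u' /\ cl u < cl u') \/ (cl u = cl u' /\ u' < u /\ rw u' < rw u).
Proof.
move=> H1 H2 /(Hord _ _ H1 H2) [H|[H3 H4]].
  left; split => //; case: (ltnP u u') => // Hle.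
  have [_ ] := @mono_from_step _ _ _ Hstep _ _ Hle H1; lia.
right; have := Hsum _ H1; have := Hsum _ H2; lia.
Qed.

Lemma samecol_down u u' : u < m -> u' < u -> cl u' = cl u ->
  rw u'.+1 = rw u' + 1 /\ cl u'.+1 = cl u'.
Proof.
move=> H1 H2 H3.
have [_ C1] := @mono_from_step _ _ _ Hstep _ _ (leqnn u'.+1) (leq_ltn_trans H2 H1).
have [_ C2] := @mono_from_step _ _ _ Hstep _ _ H2 H1.
have := Hstep u' (leq_ltn_trans H2 H1); lia.
Qed.

Lemma core_e :
  (if t == 0 then 1 < a 1 else a t < a t.+1) <->
  ((v t).-1 != 0 /\
   ~ (exists u u', [/\ u < m, u' < m, ord u u', v u = v t & v u' = (v t).-1]) /\
   forall u, u < m -> ord u t -> v u != v t).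
Proof.
have Hprev : 0 < t -> (a t < a t.+1) -> v t.-1 < v t.
  move=> H0 Hlt; have := Hstep t.-1; rewrite prednK // => /(_ Ht).
  rewrite /v prednK //; lia.
split.
  move=> Hd.
  have Hl2 : 2 <= v t.
    move: Hd; case: eqP => [E|E] Hd.
      subst t; have := Hsum _ Ht; have := Hr1 _ Ht; have := Hc1 _ Ht; rewrite /v; lia.
    have := Hprev (ltac:(lia)) Hd; have := Hapos _ (ltn_trans (ltac:(lia) : t.-1 < t) Ht).
    rewrite /v /= prednK; lia.
  split; first lia.
  split.
    case=> u [u' [Hu Hu' Ho E1 E2]].
    case: (ord_lt _ _ Hu Hu' Ho) => [[H1 _]|[H1 [H2 H3]]].
      have := vmono _ _ (ltnW H1) Hu'; lia.
    have [D1 D2] := samecol_down _ _ Hu H2 (esym H1).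
    have Hu1 : u'.+1 < m by lia.
    have := vmono _ _ H2 Hu; have := Ha u'.+1 u'.+2 erefl (leqnSn _) Hu1.
    have := Hr1 _ Hu'; rewrite /v in E1 E2 * => A0 A1 A2.
    have Eq : a u'.+2 = a u'.+1 by lia.
    case: (ltngtP u'.+1 t) => Hc.
    - have := Hprev (ltac:(lia)) ; move: Hd; case: eqP => [E|_] Hd; first lia.
      move/(_ Hd); have := vmono (u'.+1) (t.-1) (ltac:(lia)) (ltac:(lia)).
      rewrite /v; lia.
    - have := vmono (t) (u') (ltac:(lia)) Hu'; rewrite /v; lia.
    - subst t; move: Hd => /=; lia.
  move=> u Hu Ho; apply/eqP => E.
  case: (ord_lt _ _ Hu Ht Ho) => [[H1 _]|[H1 [H2 H3]]].
    move: Hd; case: eqP => [Et|_] Hd; first lia.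
    have := Hprev (ltac:(lia)) Hd; have := vmono (u) (t.-1) (ltac:(lia)) (ltac:(lia)).
    move: E; lia.
  have := vstrict _ _ (ltnW H2) Hu H3; move: E; lia.
case=> [Hl [Hnb Hnp]].
case: eqP => [E|E].
  subst t; move: Hl; have := Hsum _ Ht; have := Hr1 _ Ht; have := Hc1 _ Ht; rewrite /v; lia.
have Ht1 : t.-1 < m by lia.
have := Ha t t.+1 (ltac:(lia)) (leqnSn _) Ht.
case: (ltngtP (a t) (a t.+1)) => // Eq _.
have := Hstep t.-1; rewrite prednK; last lia.
case/(_ Ht) => [[S1 S2]|[S1 S2]].
  have Ho : ord t.-1 t by apply/(Hord _ _ Ht1 Ht); left; lia.
  have := Hnp _ Ht1 Ho; rewrite /v prednK; last lia.
  move/eqP; lia.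
exfalso; apply: Hnb; exists t, t.-1; split => //.
  by apply/(Hord _ _ Ht Ht1); right; split; lia.
rewrite /v prednK; last lia.
have := Hr1 _ Ht1; lia.
Qed.

Lemma core_f :
  (if t.+1 == m then True else a t.+1 < a t.+2) <->
  (v t != 0 /\
   ~ (exists u u', [/\ u < m, u' < m, ord u u', v u = (v t).+1 & v u' = v t]) /\
   forall u, u < m -> ord t u -> v u != v t).
Proof.
have Hnext : t.+1 < m -> (a t.+1 < a t.+2) -> v t < v t.+1.
  move=> H0 Hlt; have := Hstep t H0; rewrite /v; lia.
split.
  move=> Hd.
  split; first by have := Hapos _ Ht; rewrite /v; lia.
  split.
    case=> u [u' [Hu Hu' Ho E1 E2]].
    case: (ord_lt _ _ Hu Hu' Ho) => [[H1 _]|[H1 [H2 H3]]].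
      have := vmono _ _ (ltnW H1) Hu'; lia.
    have [D1 D2] := samecol_down _ _ Hu H2 (esym H1).
    have Hu1 : u'.+1 < m by lia.
    have := vmono _ _ H2 Hu; have := Ha u'.+1 u'.+2 erefl (leqnSn _) Hu1.
    have := Hr1 _ Hu'; rewrite /v in E1 E2 * => A0 A1 A2.
    have Eq : a u'.+2 = a u'.+1 by lia.
    case: (ltngtP u' t) => Hc.
    - have := vmono (u'.+1) (t) (ltac:(lia)) Ht; rewrite /v; lia.
    - have Ht1 : t.+1 < m by lia.
      move: Hd; rewrite (_ : (t.+1 == m) = false); last by apply/eqP; lia.
      move=> Hd; have := Hnext Ht1 Hd; have := vmono (t.+1) (u') Hc Hu'.
      rewrite /v; lia.
    - subst t; move: Hd; rewrite (_ : (u'.+1 == m) = false); last by apply/eqP; lia.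
      lia.
  move=> u Hu Ho; apply/eqP => E.
  case: (ord_lt _ _ Ht Hu Ho) => [[H1 _]|[H1 [H2 H3]]].
    have Ht1 : t.+1 < m by lia.
    move: Hd; rewrite (_ : (t.+1 == m) = false); last by apply/eqP; lia.
    move=> Hd; have := Hnext Ht1 Hd; have := vmono (t.+1) (u) H1 Hu.
    move: E; lia.
  have := vstrict _ _ (ltnW H2) Ht H3; move: E; lia.
case=> [Hl [Hnb Hnp]].
case: eqP => [//|E].
have Ht1 : t.+1 < m by lia.
have := Ha t.+1 t.+2 erefl (leqnSn _) Ht1.
case: (ltngtP (a t.+1) (a t.+2)) => // Eq _.
case: (Hstep t Ht1) => [[S1 S2]|[S1 S2]].
  have Ho : ord t t.+1 by apply/(Hord _ _ Ht Ht1); left; lia.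
  have := Hnp _ Ht1 Ho; rewrite /v.
  move/eqP; lia.
exfalso; apply: Hnb; exists t.+1, t; split => //.
  by apply/(Hord _ _ Ht1 Ht); right; split; lia.
rewrite /v; have := Hr1 _ Ht; lia.
Qed.

End Core.
Lemma rL_irr : irreflexive rL.
Proof. move=> [a b]; rewrite /rL /=; lia. Qed.

Lemma pairwise_index (R : seq (nat * nat)) x y : pairwise ltR R -> x \in R -> y \in R ->
  (index x R < index y R) = ltR x y.
Proof.
move=> /(pairwiseP (0,0)) HP Hx Hy.
have Hix : index x R < size R by rewrite index_mem.
have Hiy : index y R < size R by rewrite index_mem.
case: (ltngtP (index x R) (index y R)) => H.
- by have := HP _ _ Hix Hiy H; rewrite !nth_index.
- have := HP _ _ Hiy Hix H; rewrite !nth_index // => H1.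
  apply/esym/negP => H2; have := ltR_trans _ _ _ H1 H2; by rewrite ltR_irr.
- have : x = y by rewrite -(nth_index (0,0) Hx) -(nth_index (0,0) Hy) H.
  by move=> ->; rewrite ltR_irr.
Qed.

Lemma a_mono (m : nat) (a : nat -> nat) :
  (forall j, 1 <= j -> j < m -> a j <= a j.+1) ->
  forall d d', 1 <= d -> d <= d' -> d' <= m -> a d <= a d'.
Proof.
move=> H d d' H1 Hle; rewrite -(subnK Hle); elim: (d' - d) => [|n IH] //= Hn.
rewrite addSn; apply: leq_trans (IH (ltnW Hn)) _; apply: H; lia.
Qed.

Theorem proposition3p8 (m : nat) (Q : nat -> nat -> nat) (sigma : seq nat)
    (k : nat) (c : nat * nat) (l : nat) :
  is_quasi_array m Q ->
  is_composition m sigma ->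
  1 <= k <= m ->
  c \in ribbon_cells sigma ->
  on_diag k c.1 c.2 ->
  l = Q c.1 c.2 ->
  let T := pi_sigma sigma Q in
  let w := col_reading T in
  let p := index c (col_reading_cells sigma) in
  ((C_defined k Q <-> is_some (e_op l.-1 w) /\ e_pos l.-1 w = p) /\
   (C_defined k Q -> e_op l.-1 w = Some (col_reading (pi_sigma sigma (C_op k Q)))))
  /\
  ((D_defined m k Q <-> is_some (f_op l w) /\ f_pos l w = p) /\
   (D_defined m k Q -> f_op l w = Some (col_reading (pi_sigma sigma (D_op k Q))))).
Proof.
move=> [HQpos HQmon] /andP[Hpos /eqP Hm] /andP[Hk1 Hkm] Hc Hdiag Hl.
cbv zeta.
have [HsL HLn] := ribbon_nth sigma 1 1 Hpos.
rewrite -/(ribbon_cells sigma) Hm in HsL HLn.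
set L := ribbon_cells sigma in Hc HsL HLn.
pose rw u := (nth (0,0) L u).1.
pose cl u := (nth (0,0) L u).2.
have Hsum : forall u, u < m -> rw u + cl u = u + 2.
  by move=> u Hu; have [] := HLn u Hu; rewrite /rw /cl; lia.
have Hr1 : forall u, u < m -> 1 <= rw u by move=> u Hu; have [] := HLn u Hu.
have Hc1 : forall u, u < m -> 1 <= cl u by move=> u Hu; have [] := HLn u Hu.
have Hstep : forall u, u.+1 < m -> (rw u.+1 = rw u /\ cl u.+1 = cl u + 1) \/ (rw u.+1 = rw u + 1 /\ cl u.+1 = cl u).
  move=> u Hu; have [_ _ _ ] := HLn u (ltnW Hu); case/(_ Hu) => E.
    by left; rewrite /rw /cl E /=; lia.
  by right; rewrite /rw /cl E /=; lia.
have HsortL : sorted rL L.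
  apply/(sortedP (0,0)) => i; rewrite HsL => Hi.
  have := Hstep i Hi; rewrite /rw /cl /rL; lia.
have HuL : uniq L by apply: (sorted_uniq rL_trans rL_irr).
have HLu : forall u, u < m -> nth (0,0) L u \in L by move=> u Hu; rewrite mem_nth // HsL.
set R := col_reading_cells sigma.
have HpR : pairwise ltR R by apply: flat_pairwise.
have HuR : uniq R by apply: (sorted_uniq ltR_trans ltR_irr); rewrite sorted_pairwise //; exact: ltR_trans.
have HmemR : forall y, (y \in R) = (y \in L).
  move=> y; rewrite /R /col_reading_cells flat_mem -/L Hm.
  case Hy: (y \in L) => //=.
  have Hi : index y L < m by rewrite -HsL index_mem.
  have := Hr1 _ Hi; have := Hsum _ Hi; have := Hc1 _ Hi; rewrite /rw /cl nth_index // => H1 H2 H3.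
  apply/andP; split; lia.
have Hord : forall u u', u < m -> u' < m ->
    (index (nth (0,0) L u) R < index (nth (0,0) L u') R <-> cl u < cl u' \/ (cl u = cl u' /\ u' < u)).
  move=> u u' Hu Hu'; rewrite pairwise_index ?HmemR ?HLu // /ltR -/(cl u) -/(cl u') -/(rw u) -/(rw u').
  have := Hsum _ Hu; have := Hsum _ Hu'; split; lia.
pose a d := Q 1 d.
have Ha : forall d d', 1 <= d -> d <= d' -> d' <= m -> a d <= a d'.
  by apply: a_mono => j H1 H2; apply: HQmon.
have HvQ : forall u, u < m -> Q (rw u) (cl u) = a u.+1 + (rw u - 1) /\ 0 < Q (rw u) (cl u).
  move=> u Hu; have := HQpos (rw u) (cl u) (Hr1 _ Hu) (Hc1 _ Hu).
  rewrite Hsum // (_ : u + 2 - 1 = u.+1); last lia.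
  by case/(_ (ltac:(lia))) => H1 H2; split.
have Hapos : forall u, u < m -> 0 < a u.+1 + (rw u - 1).
  by move=> u Hu; have [<- ] := HvQ u Hu.
pose t := index c L.
have Ht : t < m by rewrite -HsL index_mem.
have Hct : nth (0,0) L t = c by rewrite nth_index.
have Hk : k = t.+1.
  by move: Hdiag; rewrite /on_diag -Hct; have := Hsum _ Ht; rewrite /rw /cl; lia.
subst k.
pose f := fun x : nat * nat => Q x.1 x.2.
have Hw : col_reading (pi_sigma sigma Q) = map f R by [].
rewrite Hw.
pose v u := a u.+1 + (rw u - 1).
have Hfv : forall u, u < m -> f (nth (0,0) L u) = v u by move=> u Hu; have [] := HvQ u Hu.
have Hlv : l = v t by rewrite Hl -Hct -Hfv.
have Hl0 : 0 < l by rewrite Hlv; exact: Hapos.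
have HcR : c \in R by rewrite HmemR.
have HsR : size R = m by rewrite -HsL; apply: perm_size; apply: uniq_perm.
have HLR : forall u, u < m -> nth (0,0) L u \in R by move=> u Hu; rewrite HmemR HLu.
have Hpos2u : forall i, i < m -> exists2 u, u < m & nth (0,0) R i = nth (0,0) L u.
  move=> i Hi; exists (index (nth (0,0) R i) L); last by rewrite nth_index // -HmemR mem_nth // HsR.
  by rewrite -HsL index_mem -HmemR mem_nth // HsR.
pose ord u u' := index (nth (0,0) L u) R < index (nth (0,0) L u') R.
have Hnw : forall i, i < m -> nth 0 (map f R) i = f (nth (0,0) R i).
  by move=> i Hi; rewrite (nth_map (0,0)) // HsR.
have Hidx : forall u, u < m -> index (nth (0,0) L u) R < m.
  by move=> u Hu; rewrite -HsR index_mem HLR.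
have Hiu : forall i u, i < m -> nth (0,0) R i = nth (0,0) L u -> index (nth (0,0) L u) R = i.
  by move=> i u Hi <-; rewrite index_uniq // HsR.
have K1 : forall a0 b0, subseq [:: a0; b0] (map f R) <->
    exists u u', [/\ u < m, u' < m, ord u u', v u = a0 & v u' = b0].
  move=> a0 b0; split.
    move/subseq2P => [i [j [Hij Hj Hi Hj']]]; rewrite size_map HsR in Hj.
    have Hi' : i < m by lia.
    have [u Hu Eu] := Hpos2u i Hi'; have [u' Hu' Eu'] := Hpos2u j Hj.
    exists u, u'; split => //.
    - by rewrite /ord (Hiu _ _ Hi' Eu) (Hiu _ _ Hj Eu').
    - by rewrite -Hfv // -Eu -Hnw.
    - by rewrite -Hfv // -Eu' -Hnw.
  case=> u [u' [Hu Hu' Ho E1 E2]]; apply/subseq2P.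
  exists (index (nth (0,0) L u) R), (index (nth (0,0) L u') R); split => //.
  - by rewrite size_map HsR Hidx.
  - by rewrite Hnw ?Hidx // nth_index ?HLR // Hfv.
  - by rewrite Hnw ?Hidx // nth_index ?HLR // Hfv.
have Hpm : index c R < m by rewrite -HsR index_mem.
have Hnwp : nth 0 (map f R) (index c R) = l by rewrite Hnw // nth_index // Hlv -Hct Hfv.
have K2 : index l (map f R) = index c R <-> forall u, u < m -> ord u t -> v u != l.
  rewrite index_posP ?size_map ?HsR //; split.
    move=> H u Hu Ho; rewrite -Hfv //.
    have := H (index (nth (0,0) L u) R); rewrite /ord Hct in Ho; move/(_ Ho).
    by rewrite Hnw ?Hidx // nth_index ?HLR.
  move=> H i Hi; have Him : i < m by lia.
  have [u Hu Eu] := Hpos2u i Him.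
  rewrite Hnw // Eu Hfv //; apply: H => //.
  by rewrite /ord Hct (Hiu _ _ Him Eu).
have K3 : f_pos l (map f R) = index c R <-> forall u, u < m -> ord t u -> v u != l.
  rewrite /f_pos rindex_posP ?size_map ?HsR //; split.
    move=> H u Hu Ho; rewrite -Hfv //.
    have := H (index (nth (0,0) L u) R); rewrite /ord Hct in Ho.
    rewrite Ho Hidx //; move/(_ isT).
    by rewrite Hnw ?Hidx // nth_index ?HLR.
  move=> H i /andP [Hi1 Hi]. 
  have [u Hu Eu] := Hpos2u i Hi.
  rewrite Hnw // Eu Hfv //; apply: H => //.
  by rewrite /ord Hct (Hiu _ _ Hi Eu).
have Ce := @core_e m t rw cl a ord Hsum Hr1 Hc1 Hstep Ha Hapos Hord Ht.
have Cf := @core_f m t rw cl a ord Hsum Hr1 Hstep Ha Hapos Hord Ht.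
rewrite /v in K1 K2 K3 Hlv; rewrite Hlv in Hl0 Hnwp K2 K3 *.
set lv := a t.+1 + (rw t - 1) in Ce Cf K2 K3 Hnwp Hl0 *.
have Hl1 : lv.-1.+1 = lv := prednK Hl0.
have HlinW : lv \in map f R by rewrite -Hnwp mem_nth // size_map HsR.
have HC : C_defined t.+1 Q <-> (if t == 0 then 1 < a 1 else a t < a t.+1) := iff_refl _.
have HD : D_defined m t.+1 Q <-> (if t.+1 == m then True else a t.+1 < a t.+2) := iff_refl _.
have Hupd : forall (g : nat -> nat -> nat) vv,
    (forall u, u < m -> g (rw u) (cl u) = if u == t then vv else f (nth (0,0) L u)) ->
    col_reading (pi_sigma sigma g) = set_nth 0 (map f R) (index c R) vv.
  move=> g vv Hg; rewrite set_nth_map //; apply/eq_in_map => y; rewrite HmemR => Hy.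
  have Hi : index y L < m by rewrite -HsL index_mem.
  have := Hg _ Hi; rewrite /rw /cl nth_index // /= => E; rewrite /= E.
  have -> : (y == c) = (index y L == t).
    by rewrite -Hct -{1}(nth_index (0,0) Hy) nth_uniq ?HsL.
  by [].
have Hft : Q (rw t) (cl t) = lv by exact: (Hfv t Ht).
have HgC : forall u, u < m -> C_op t.+1 Q (rw u) (cl u) = if u == t then lv.-1 else f (nth (0,0) L u).
  move=> u Hu; rewrite /C_op /on_diag (_ : (rw u + cl u == t.+2) = (u == t)); last first.
    by apply/eqP/eqP; have := Hsum _ Hu; lia.
  by case: eqP => // ->; rewrite Hft subn1.
have HgD : forall u, u < m -> D_op t.+1 Q (rw u) (cl u) = if u == t then lv.+1 else f (nth (0,0) L u).
  move=> u Hu; rewrite /D_op /on_diag (_ : (rw u + cl u == t.+2) = (u == t)); last first.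
    by apply/eqP/eqP; have := Hsum _ Hu; lia.
  by case: eqP => // ->; rewrite Hft addn1.
split; split.
- rewrite HC Ce /e_op /e_pos /qk_blocked Hl1 HlinW /= orbF.
  split.
  + case=> [H0 [Hnb Hnp]].
    have Hs : subseq [:: lv; lv.-1] (map f R) = false by apply/negP => /K1.
    by rewrite (negbTE H0) Hs /=; split => //; apply/K2.
  + case: ifP => [_ [] //|/negbT /norP [H0 Hs] [_ Hi]]; split => //; split; last by apply/K2.
    by move=> /K1 H; rewrite H in Hs.
- move/HC/Ce => [H0 [Hnb Hnp]].
  have Hs : subseq [:: lv; lv.-1] (map f R) = false by apply/negP => /K1.
  rewrite /e_op /e_pos /qk_blocked Hl1 HlinW /= orbF (negbTE H0) Hs /= (proj2 K2 Hnp).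
  by congr Some; symmetry; apply: Hupd.
- rewrite HD Cf /f_op /qk_blocked HlinW /= orbF.
  split.
  + case=> [H0 [Hnb Hnp]].
    have Hs : subseq [:: lv.+1; lv] (map f R) = false by apply/negP => /K1.
    by rewrite (negbTE H0) Hs /=; split => //; apply/K3.
  + case: ifP => [_ [] //|/negbT /norP [H0 Hs] [_ Hi]]; split => //; split; last by apply/K3.
    by move=> /K1 H; rewrite H in Hs.
- move/HD/Cf => [H0 [Hnb Hnp]].
  have Hs : subseq [:: lv.+1; lv] (map f R) = false by apply/negP => /K1.
  rewrite /f_op /qk_blocked HlinW /= orbF (negbTE H0) Hs /= (proj2 K3 Hnp).
  by congr Some; symmetry; apply: Hupd.
Qed.
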